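(* Let $A$ be a unital C*-algebra such that $\mathcal C(A)$ satisfies the ascending chain condition: every chain $C_1\subseteq C_2\subseteq C_3\subseteq\cdots$ in $\mathcal C(A)$ stabilizes. Then the topological space $\Sigma_\ast$ is sober (every nonempty irreducible closed subset is the closure of a unique point). In particular, $\Sigma_\ast$ is sober whenever $A$ is finite-dimensional.
   Context: Let $A$ be a unital C*-algebra. $\mathcal C(A)$ is the poset (under inclusion) of commutative C*-subalgebras of $A$ containing the unit of $A$. For $C\in\mathcal C(A)$, $\Sigma_C$ is its Gelfand spectrum; for $C\subseteq C'$ and $\lambda'\in\Sigma_{C'}$, $\lambda'|_C$ is the restriction. Let $\Sigma=\{(C,\lambda)\mid C\in\mathcal C(A),\lambda\in\Sigma_C\}$ and $U_C=\{\lambda\mid(C,\lambda)\in U\}$ for $U\subseteq\Sigma$. The space $\Sigma_\ast$ is $\Sigma$ with the topology in which $U$ is open iff (1) each $U_C$ is open in $\Sigma_C$, and (2) if $\lambda\in U_C$, $C\subseteq C'$ and $\lambda'\in\Sigma_{C'}$ with $\lambda'|_C=\lambda$, then $\lambda'\in U_{C'}$. *)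

(* Defs.v *)
From Stdlib Require Import Reals List.
Open Scope R_scope.

Record Cx : Type := mkC { re : R; im : R }.
Definition C0 : Cx := mkC 0 0.
Definition C1 : Cx := mkC 1 0.
Definition Cadd (z w : Cx) : Cx := mkC (re z + re w) (im z + im w).
Definition Copp (z : Cx) : Cx := mkC (- re z) (- im z).
Definition Cmul (z w : Cx) : Cx :=
  mkC (re z * re w - im z * im w) (re z * im w + im z * re w).
Definition Cconj (z : Cx) : Cx := mkC (re z) (- im z).
Definition Cnorm (z : Cx) : R := sqrt (re z * re z + im z * im z).

Record CstarAlg : Type := {
  car :> Type;
  a0 : car; a1 : car;
  aadd : car -> car -> car;
  aopp : car -> car;
  amul : car -> car -> car;
  asmul : Cx -> car -> car;
  astar : car -> car;
  anorm : car -> R;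
  aaddA : forall x y z, aadd x (aadd y z) = aadd (aadd x y) z;
  aaddC : forall x y, aadd x y = aadd y x;
  aadd0 : forall x, aadd x a0 = x;
  aaddN : forall x, aadd x (aopp x) = a0;
  asmulA : forall a b x, asmul (Cmul a b) x = asmul a (asmul b x);
  asmul1 : forall x, asmul C1 x = x;
  asmulDr : forall a x y, asmul a (aadd x y) = aadd (asmul a x) (asmul a y);
  asmulDl : forall a b x, asmul (Cadd a b) x = aadd (asmul a x) (asmul b x);
  amulA : forall x y z, amul x (amul y z) = amul (amul x y) z;
  amul1l : forall x, amul a1 x = x;
  amul1r : forall x, amul x a1 = x;
  amulDl : forall x y z, amul (aadd x y) z = aadd (amul x z) (amul y z);
  amulDr : forall x y z, amul x (aadd y z) = aadd (amul x y) (amul x z);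
  asmul_mull : forall a x y, asmul a (amul x y) = amul (asmul a x) y;
  asmul_mulr : forall a x y, asmul a (amul x y) = amul x (asmul a y);
  astarD : forall x y, astar (aadd x y) = aadd (astar x) (astar y);
  astarZ : forall a x, astar (asmul a x) = asmul (Cconj a) (astar x);
  astarM : forall x y, astar (amul x y) = amul (astar y) (astar x);
  astarK : forall x, astar (astar x) = x;
  anorm_eq0 : forall x, anorm x = 0 -> x = a0;
  anormZ : forall a x, anorm (asmul a x) = Cnorm a * anorm x;
  anorm_triangle : forall x y, anorm (aadd x y) <= anorm x + anorm y;
  anorm_submul : forall x y, anorm (amul x y) <= anorm x * anorm y;
  acomplete : forall u : nat -> car,
    (forall eps, 0 < eps -> exists N, forall m n, (N <= m)%nat -> (N <= n)%nat ->
        anorm (aadd (u m) (aopp (u n))) < eps) ->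
    exists l, forall eps, 0 < eps -> exists N, forall n, (N <= n)%nat ->
        anorm (aadd (u n) (aopp l)) < eps;
  acstar : forall x, anorm (amul (astar x) x) = anorm x * anorm x
}.

Section Defs.
Variable A : CstarAlg.

Definition converges (u : nat -> A) (l : A) : Prop :=
  forall eps, 0 < eps -> exists N, forall n, (N <= n)%nat ->
    anorm A (aadd A (u n) (aopp A l)) < eps.

Definition is_comm_csub (S : A -> Prop) : Prop :=
  S (a1 A) /\
  (forall x y, S x -> S y -> S (aadd A x y)) /\
  (forall a x, S x -> S (asmul A a x)) /\
  (forall x y, S x -> S y -> S (amul A x y)) /\
  (forall x, S x -> S (astar A x)) /\
  (forall u l, (forall n, S (u n)) -> converges u l -> S l) /\
  (forall x y, S x -> S y -> amul A x y = amul A y x).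

Definition CSub : Type := { S : A -> Prop | is_comm_csub S }.
Definition mem (C : CSub) (x : A) : Prop := proj1_sig C x.
Definition csub_le (C C' : CSub) : Prop := forall x, mem C x -> mem C' x.

Definition is_character (C : CSub) (chi : {x : A | mem C x} -> Cx) : Prop :=
  (forall x y (hx : mem C x) (hy : mem C y) (hxy : mem C (aadd A x y)),
      chi (exist _ _ hxy) = Cadd (chi (exist _ _ hx)) (chi (exist _ _ hy))) /\
  (forall a x (hx : mem C x) (hax : mem C (asmul A a x)),
      chi (exist _ _ hax) = Cmul a (chi (exist _ _ hx))) /\
  (forall x y (hx : mem C x) (hy : mem C y) (hxy : mem C (amul A x y)),
      chi (exist _ _ hxy) = Cmul (chi (exist _ _ hx)) (chi (exist _ _ hy))) /\
  (exists x, chi x <> C0).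

Definition Spec (C : CSub) : Type :=
  { chi : {x : A | mem C x} -> Cx | is_character C chi }.
Definition ev (C : CSub) (l : Spec C) : {x : A | mem C x} -> Cx := proj1_sig l.
Arguments ev {C} l x.

Definition open_spec {C : CSub} (U : Spec C -> Prop) : Prop :=
  forall l, U l -> exists (xs : list {x : A | mem C x}) (eps : R), 0 < eps /\
    forall m, (forall x, In x xs -> Cnorm (Cadd (ev m x) (Copp (ev l x))) < eps) -> U m.

Definition restricts {C C' : CSub} (l' : Spec C') (l : Spec C) : Prop :=
  forall x (hx : mem C x) (hx' : mem C' x),
    ev l' (exist _ x hx') = ev l (exist _ x hx).

Definition Sigma : Type := { C : CSub & Spec C }.

Definition open_star (U : Sigma -> Prop) : Prop :=
  (forall C : CSub, open_spec (fun l : Spec C => U (existT _ C l))) /\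
  (forall (C C' : CSub) (l : Spec C) (l' : Spec C'),
      U (existT _ C l) -> csub_le C C' -> restricts l' l -> U (existT _ C' l')).

Definition ACC_CA : Prop :=
  forall c : nat -> CSub, (forall n, csub_le (c n) (c (S n))) ->
    exists N, forall n, (N <= n)%nat -> c n = c N.

Fixpoint lincomb (n : nat) (c : nat -> Cx) (e : nat -> A) : A :=
  match n with
  | O => a0 A
  | S k => aadd A (lincomb k c e) (asmul A (c k) (e k))
  end.

Definition finite_dim : Prop :=
  exists (n : nat) (e : nat -> A), forall a, exists c, a = lincomb n c e.

End Defs.
Arguments open_star {A} U.


Section Topo.
Variable X : Type.
Variable open : (X -> Prop) -> Prop.

Definition closed (F : X -> Prop) : Prop := open (fun x => ~ F x).
Definition closure (S : X -> Prop) (y : X) : Prop :=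
  forall F, closed F -> (forall z, S z -> F z) -> F y.
Definition irreducible (F : X -> Prop) : Prop :=
  (exists x, F x) /\
  forall F1 F2, closed F1 -> closed F2 -> (forall x, F x -> F1 x \/ F2 x) ->
    (forall x, F x -> F1 x) \/ (forall x, F x -> F2 x).
Definition sober : Prop :=
  forall F, closed F -> irreducible F ->
    exists! x : X, forall y, F y <-> closure (fun z => z = x) y.
End Topo.

(* Main.v *)
Require Import Defs.
From Stdlib Require Import Reals List Lra Psatz Classical ClassicalEpsilon FunctionalExtensionality PropExtensionality ProofIrrelevance Arith Lia.
Open Scope R_scope.

Ltac Ceq := repeat match goal with w : Cx |- _ => destruct w end;
  unfold Cadd, Cmul, Copp, C0, Defs.C1, Cconj; simpl; f_equal; ring.

Definition Cinv (a : Cx) : Cx :=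
  mkC (re a / (re a * re a + im a * im a)) (- im a / (re a * re a + im a * im a)).

Lemma Cinv_l (a b : Cx) : a <> C0 -> Cmul (Cmul b (Cinv a)) a = b.
Proof.
  intro Ha. destruct a as [ar ai], b as [br bi].
  assert (Hd : ar * ar + ai * ai <> 0).
  { intro Hd. apply Ha. assert (ar = 0) by nra. assert (ai = 0) by nra. subst. reflexivity. }
  unfold Cmul, Cinv; simpl. f_equal; field; exact Hd.
Qed.

Section Alg.
Variable A : CstarAlg.

Lemma smul0 (x : A) : asmul A C0 x = a0 A.
Proof.
  set (s := asmul A C0 x).
  assert (h : aadd A s s = s).
  { unfold s. rewrite <- asmulDl. f_equal. Ceq. }
  transitivity (aadd A (aadd A s s) (aopp A s)).
  - rewrite <- aaddA, aaddN, aadd0. reflexivity.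
  - rewrite h, aaddN. reflexivity.
Qed.

Lemma smulz (a : Cx) : asmul A a (a0 A) = a0 A.
Proof.
  rewrite <- (smul0 (a0 A)) at 1. rewrite <- asmulA.
  replace (Cmul a C0) with C0 by Ceq. apply smul0.
Qed.

Lemma negl (u : A) : aadd A (asmul A (Copp Defs.C1) u) u = a0 A.
Proof.
  transitivity (aadd A (asmul A (Copp Defs.C1) u) (asmul A Defs.C1 u)).
  - rewrite asmul1. reflexivity.
  - rewrite <- asmulDl. replace (Cadd (Copp Defs.C1) Defs.C1) with C0 by Ceq. apply smul0.
Qed.

Lemma negr (u : A) : aadd A u (asmul A (Copp Defs.C1) u) = a0 A.
Proof. rewrite aaddC. apply negl. Qed.

Lemma aadd4 (x y z w : A) :
  aadd A (aadd A x y) (aadd A z w) = aadd A (aadd A x z) (aadd A y w).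
Proof.
  rewrite <- !aaddA. f_equal. rewrite !aaddA. f_equal. apply aaddC.
Qed.

Variable e : nat -> A.

Lemma lc_zero m : lincomb A m (fun _ => C0) e = a0 A.
Proof. induction m; simpl; [reflexivity|]. rewrite IHm, smul0, aadd0. reflexivity. Qed.

Lemma lc_add m c d : lincomb A m (fun i => Cadd (c i) (d i)) e =
  aadd A (lincomb A m c e) (lincomb A m d e).
Proof.
  induction m; simpl.
  - rewrite aadd0. reflexivity.
  - rewrite IHm, asmulDl, aadd4. reflexivity.
Qed.

Lemma lc_smul m t c : lincomb A m (fun i => Cmul t (c i)) e = asmul A t (lincomb A m c e).
Proof.
  induction m; simpl.
  - rewrite smulz. reflexivity.
  - rewrite IHm, asmulDr, asmulA. reflexivity.
Qed.

Definition span m (x : A) := exists c, x = lincomb A m c e.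

Lemma span0 m : span m (a0 A).
Proof. exists (fun _ => C0). rewrite lc_zero. reflexivity. Qed.
Lemma span_add m x y : span m x -> span m y -> span m (aadd A x y).
Proof. intros [c ->] [d ->]. exists (fun i => Cadd (c i) (d i)). rewrite lc_add. reflexivity. Qed.
Lemma span_smul m t x : span m x -> span m (asmul A t x).
Proof. intros [c ->]. exists (fun i => Cmul t (c i)). rewrite lc_smul. reflexivity. Qed.

Definition subsp (P : A -> Prop) :=
  P (a0 A) /\ (forall x y, P x -> P y -> P (aadd A x y)) /\ (forall a x, P x -> P (asmul A a x)).

Lemma mono (c : nat -> A -> Prop) : (forall k x, c k x -> c (S k) x) ->
  forall i j x, (i <= j)%nat -> c i x -> c j x.
Proof. intros H i j x Hij. induction Hij; auto. Qed.

Lemma chain_stab m : forall (c : nat -> A -> Prop), (forall k, subsp (c k)) ->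
  (forall k x, c k x -> c (S k) x) -> (forall k x, c k x -> span m x) ->
  exists N, forall k, (N <= k)%nat -> forall x, c k x -> c N x.
Proof.
  induction m as [|m IH]; intros c Hs Hasc Hsp.
  - exists 0%nat. intros k _ x Hx. destruct (Hsp k x Hx) as [d Hd]. simpl in Hd. subst x.
    apply (Hs 0%nat).
  - pose (c' := fun k x => c k x /\ span m x).
    destruct (IH c') as [N1 HN1].
    { intro k. destruct (Hs k) as [H0 [Ha Hm]]. split; [|split].
      - split; [exact H0| apply span0].
      - intros x y [? ?] [? ?]; split; auto using span_add.
      - intros a x [? ?]; split; auto using span_smul. }
    { intros k x [? ?]; split; auto. }
    { intros k x [? ?]; auto. }
    pose (I := fun k a => exists w, span m w /\ c k (aadd A w (asmul A a (e m)))).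
    assert (Hfin : forall N, (N1 <= N)%nat -> (forall k a, (N <= k)%nat -> a <> C0 -> I k a -> I N a) ->
      forall k, (N <= k)%nat -> forall x, c k x -> c N x).
    { intros N HN HI k Hk v Hv.
      destruct (Hsp k v Hv) as [d Hd]. simpl in Hd.
      set (w := lincomb A m d e) in Hd. set (a := d m) in Hd.
      assert (Hw : span m w) by (exists d; reflexivity).
      destruct (classic (a = C0)) as [Ha|Ha].
      - rewrite Ha, smul0, aadd0 in Hd. subst v.
        apply (mono c Hasc N1 N); auto.
        apply HN1 with k; [lia|]. split; auto.
      - destruct (HI k a Hk Ha) as [w'' [Hw'' Hu]].
        { exists w. split; auto. rewrite <- Hd. exact Hv. }
        set (u := aadd A w'' (asmul A a (e m))) in Hu.
        set (z := aadd A v (asmul A (Copp Defs.C1) u)).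
        assert (Hz : z = aadd A w (asmul A (Copp Defs.C1) w'')).
        { unfold z, u. rewrite Hd, asmulDr, aadd4, negr, aadd0. reflexivity. }
        assert (Hzk : c k z).
        { destruct (Hs k) as [_ [Ha' Hm']]. unfold z. apply Ha'; auto.
          apply Hm'. apply (mono c Hasc N k); auto. }
        assert (HzN : c N z).
        { apply (mono c Hasc N1 N); auto. apply HN1 with k; [lia|]. split; auto.
          rewrite Hz. apply span_add; auto. apply span_smul; auto. }
        replace v with (aadd A z u).
        + destruct (Hs N) as [_ [Ha' _]]. auto.
        + unfold z. rewrite <- aaddA, negl, aadd0. reflexivity. }
    destruct (classic (exists k a, a <> C0 /\ I k a)) as [[k0 [b [Hb [w0 [Hw0 Hc0]]]]] | Hno].
    + exists (Nat.max N1 k0). apply Hfin; [lia|].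
      intros k a Hk Ha _. set (N := Nat.max N1 k0).
      set (t := Cmul a (Cinv b)).
      exists (asmul A t w0). split; [apply span_smul; auto|].
      assert (HcN : c N (aadd A w0 (asmul A b (e m)))).
      { apply (mono c Hasc k0 N); auto. unfold N; lia. }
      destruct (Hs N) as [_ [_ Hm']].
      specialize (Hm' t _ HcN). rewrite asmulDr, <- asmulA in Hm'.
      unfold t in Hm'. rewrite Cinv_l in Hm' by exact Hb. exact Hm'.
    + exists N1. apply Hfin; [lia|].
      intros k a _ Ha HIk. exfalso. apply Hno. exists k, a. auto.
Qed.

End Alg.

Lemma csub_eq (A : CstarAlg) (C D : CSub A) : csub_le A C D -> csub_le A D C -> C = D.
Proof.
  destruct C as [P hP], D as [Q hQ]. unfold csub_le, mem; simpl. intros H1 H2.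
  assert (P = Q).
  { apply functional_extensionality; intro x. apply propositional_extensionality; split; auto. }
  subst Q. f_equal. apply proof_irrelevance.
Qed.

Lemma fd_acc (A : CstarAlg) : finite_dim A -> ACC_CA A.
Proof.
  intros [n [e He]] cc Hasc.
  destruct (chain_stab A e n (fun k => proj1_sig (cc k))) as [N HN].
  - intro k. destruct (cc k) as [P HP]; simpl; destruct HP as [H1 [Ha [Hs _]]]. split; [|split]; auto.
    rewrite <- (smul0 A (a1 A)). auto.
  - intros k x. apply Hasc.
  - intros k x _. destruct (He x) as [c Hc]. exists c. exact Hc.
  - exists N. intros k Hk. apply csub_eq.
    + intros x. apply (HN k Hk).
    + intros x hx. exact (mono A (fun k => proj1_sig (cc k)) (fun k x h => Hasc k x h) N k x Hk hx).
Qed.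

Lemma max_exists (A : CstarAlg) : ACC_CA A -> forall Sp : CSub A -> Prop, (exists C, Sp C) ->
  exists C, Sp C /\ forall E, Sp E -> csub_le A C E -> csub_le A E C.
Proof.
  intros Hacc Sp [C0 HC0]. apply NNPP. intro Hno.
  assert (Hstep : forall p : {C | Sp C}, exists q : {C | Sp C},
     csub_le A (proj1_sig p) (proj1_sig q) /\ ~ csub_le A (proj1_sig q) (proj1_sig p)).
  { intros [C HC]. apply NNPP. intro H. apply Hno. exists C. split; auto.
    intros E HE Hle. apply NNPP. intro H'. apply H. exists (exist _ E HE). simpl. auto. }
  pose (f := fun p => proj1_sig (constructive_indefinite_description _ (Hstep p))).
  pose (c := fun n => proj1_sig (Nat.iter n f (exist _ C0 HC0))).
  destruct (Hacc c) as [N HN].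
  - intro n. unfold c. simpl. unfold f.
    destruct (constructive_indefinite_description _ _) as [q Hq]. exact (proj1 Hq).
  - specialize (HN (S N) ltac:(lia)). unfold c in HN. simpl in HN. unfold f in HN.
    destruct (constructive_indefinite_description _ _) as [q Hq]. simpl in HN.
    apply (proj2 Hq). rewrite HN. intros x hx; exact hx.
Qed.

Definition cx_open (P : Cx -> Prop) := forall w, P w -> exists eps, 0 < eps /\
  forall w', Cnorm (Cadd w' (Copp w)) < eps -> P w'.

Lemma re_bound w' w : Rabs (re w' - re w) <= Cnorm (Cadd w' (Copp w)).
Proof.
  unfold Cnorm, Cadd, Copp; simpl. rewrite <- sqrt_Rsqr_abs. apply sqrt_le_1.
  - apply Rle_0_sqr.
  - apply Rplus_le_le_0_compat; apply Rle_0_sqr.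
  - unfold Rsqr. match goal with |- _ <= ?a * ?a + ?b * ?b => pose proof (Rle_0_sqr a); pose proof (Rle_0_sqr b) end. unfold Rsqr in *. lra.
Qed.
Lemma im_bound w' w : Rabs (im w' - im w) <= Cnorm (Cadd w' (Copp w)).
Proof.
  unfold Cnorm, Cadd, Copp; simpl. rewrite <- sqrt_Rsqr_abs. apply sqrt_le_1.
  - apply Rle_0_sqr.
  - apply Rplus_le_le_0_compat; apply Rle_0_sqr.
  - unfold Rsqr. match goal with |- _ <= ?a * ?a + ?b * ?b => pose proof (Rle_0_sqr a); pose proof (Rle_0_sqr b) end. unfold Rsqr in *. lra.
Qed.

Lemma sep_g (g : Cx -> R) (Hg : forall w' w, Rabs (g w' - g w) <= Cnorm (Cadd w' (Copp w)))
  w1 w2 : g w1 < g w2 -> exists P1 P2, cx_open P1 /\ cx_open P2 /\ P1 w1 /\ P2 w2 /\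
   forall w, P1 w -> P2 w -> False.
Proof.
  intro H. set (m := (g w1 + g w2) / 2).
  exists (fun w => g w < m), (fun w => m < g w). split; [|split; [|split; [|split]]].
  - intros w Hw. exists (m - g w). split; [lra|]. intros w' Hw'.
    specialize (Hg w' w). unfold Rabs in Hg; destruct (Rcase_abs _) in Hg; lra.
  - intros w Hw. exists (g w - m). split; [lra|]. intros w' Hw'.
    specialize (Hg w' w). unfold Rabs in Hg; destruct (Rcase_abs _) in Hg; lra.
  - unfold m; lra.
  - unfold m; lra.
  - intros; lra.
Qed.

Lemma sep (w1 w2 : Cx) : w1 <> w2 -> exists P1 P2, cx_open P1 /\ cx_open P2 /\ P1 w1 /\ P2 w2 /\
   forall w, P1 w -> P2 w -> False.
Proof.
  intro Hne.
  destruct (Rtotal_order (re w1) (re w2)) as [H|[H|H]].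
  - apply (sep_g re re_bound); auto.
  - destruct (Rtotal_order (im w1) (im w2)) as [H'|[H'|H']].
    + apply (sep_g im im_bound); auto.
    + exfalso. apply Hne. destruct w1, w2; simpl in *; subst; reflexivity.
    + destruct (sep_g im im_bound w2 w1 H') as [P1 [P2 [? [? [? [? Hd]]]]]].
      exists P2, P1. repeat split; auto. intros w a b; exact (Hd w b a).
  - destruct (sep_g re re_bound w2 w1 H) as [P1 [P2 [? [? [? [? Hd]]]]]].
    exists P2, P1. repeat split; auto. intros w a b; exact (Hd w b a).
Qed.

Section Top.
Variable A : CstarAlg.

Lemma open_ext (U V : Sigma A -> Prop) : (forall z, U z <-> V z) -> open_star U -> open_star V.
Proof.
  intros He [H1 H2]. split.
  - intros C l Hl. apply He in Hl. destruct (H1 C l Hl) as [xs [eps [Heps Hm]]].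
    exists xs, eps. split; auto. intros m Hm'. apply He. auto.
  - intros C C' l l' Hl Hle Hr. apply He. apply He in Hl. eauto.
Qed.

Lemma open_closed (U : Sigma A -> Prop) : open_star U -> closed _ (@open_star A) (fun z => ~ U z).
Proof.
  intro H. unfold closed. apply (open_ext U); auto. intro z. split; [tauto|]. apply NNPP.
Qed.

Lemma up_open (D : CSub A) : open_star (fun s : Sigma A => csub_le A D (projT1 s)).
Proof.
  split.
  - intros C l Hl. exists nil, 1. split; [lra|]. intros m _. exact Hl.
  - intros C C' l l' Hl Hle _. simpl in *. intros x hx. auto.
Qed.

Lemma UP_open (z : A) (P : Cx -> Prop) : cx_open P ->
  open_star (fun s : Sigma A => exists h : mem A (projT1 s) z, P (ev A (projT1 s) (projT2 s) (exist _ z h))).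
Proof.
  intro HP. split.
  - intros C l [h Hh]. simpl in h, Hh. destruct (HP _ Hh) as [eps [Heps Hw]].
    exists (exist _ z h :: nil), eps. split; auto. intros m Hm. simpl. exists h.
    apply Hw. apply Hm. left. reflexivity.
  - intros C C' l l' [h Hh] Hle Hr. simpl in *. exists (Hle z h).
    rewrite (Hr z h (Hle z h)). exact Hh.
Qed.

Lemma irr_sep (F : Sigma A -> Prop) (U V : Sigma A -> Prop) :
  irreducible _ (@open_star A) F -> open_star U -> open_star V ->
  (exists x, F x /\ U x) -> (exists y, F y /\ V y) -> exists z, F z /\ U z /\ V z.
Proof.
  intros [_ Hirr] HU HV [x [Fx Ux]] [y [Fy Vy]]. apply NNPP. intro Hno.
  destruct (Hirr (fun z => ~ U z) (fun z => ~ V z)) as [H|H].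
  - apply open_closed; auto.
  - apply open_closed; auto.
  - intros z Fz. destruct (classic (U z)); [|auto]. destruct (classic (V z)); [|auto].
    exfalso. apply Hno. eauto.
  - exact (H x Fx Ux).
  - exact (H y Fy Vy).
Qed.

Lemma spec_eq (C : CSub A) (l l' : Spec A C) : (forall x, ev A C l x = ev A C l' x) -> l = l'.
Proof.
  destruct l as [f hf], l' as [g hg]. unfold ev; simpl. intro H.
  assert (f = g) by (apply functional_extensionality; auto). subst g.
  f_equal. apply proof_irrelevance.
Qed.

Lemma t0 (x x' : Sigma A) : (forall U, open_star U -> U x -> U x') ->
  (forall U, open_star U -> U x' -> U x) -> x = x'.
Proof.
  destruct x as [C l], x' as [C' l']. intros H1 H2.
  assert (HC : C = C').
  { apply csub_eq.
    - apply (H1 _ (up_open C)). simpl. intros z hz; exact hz.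
    - apply (H2 _ (up_open C')). simpl. intros z hz; exact hz. }
  subst C'. f_equal. apply spec_eq. intros [z hz]. apply NNPP. intro Hne.
  destruct (sep _ _ Hne) as [P1 [P2 [HP1 [HP2 [Hw1 [Hw2 Hd]]]]]].
  destruct (H1 _ (UP_open z P1 HP1)) as [h' Hh'].
  { simpl. exists hz. exact Hw1. }
  simpl in Hh'. rewrite (proof_irrelevance _ h' hz) in Hh'. eauto.
Qed.

Lemma sober_of_max : (forall Sp : CSub A -> Prop, (exists C, Sp C) ->
  exists C, Sp C /\ forall E, Sp E -> csub_le A C E -> csub_le A E C) ->
  sober (Sigma A) (@open_star A).
Proof.
  intros Hmax F HF Hirr.
  pose proof Hirr as [[x0 Fx0] _].
  destruct (Hmax (fun C => exists l, F (existT _ C l))) as [C [[l Fl] HCmax]].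
  { exists (projT1 x0). exists (projT2 x0). destruct x0; exact Fx0. }
  set (x := existT (fun C => Spec A C) C l).
  assert (Hbelow : forall D mu, F (existT _ D mu) -> csub_le A D C /\ restricts A l mu).
  { intros D mu Fy. assert (HDC : csub_le A D C).
    { apply NNPP. intro HnDC.
      destruct (irr_sep F _ _ Hirr (up_open C) (up_open D)) as [[E nu] [Fz [Uz Vz]]].
      - exists x. split; auto. simpl. intros z hz; exact hz.
      - exists (existT _ D mu). split; auto. simpl. intros z hz; exact hz.
      - simpl in Uz, Vz. apply HnDC. intros z hz. apply (HCmax E); eauto. }
    split; auto. intros z hz hz'. apply NNPP. intro Hne.
    destruct (sep _ _ Hne) as [P1 [P2 [HP1 [HP2 [Hw1 [Hw2 Hd]]]]]].
    destruct (irr_sep F _ _ Hirr (UP_open z P1 HP1) (UP_open z P2 HP2)) as [[E nu] [Fz [[h1 U1] [h2 U2]]]].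
    - exists x. split; auto. simpl. exists hz'. exact Hw1.
    - exists (existT _ D mu). split; auto. simpl. exists hz. exact Hw2.
    - simpl in U1, U2. rewrite (proof_irrelevance _ h2 h1) in U2. eauto. }
  assert (Hchar : forall y, F y <-> closure _ (@open_star A) (fun z => z = x) y).
  { intro y. split.
    - intros Fy G HG Hx. specialize (Hx x eq_refl). apply NNPP. intro Gy.
      destruct y as [D mu]. destruct (Hbelow D mu Fy) as [Hle Hr].
      destruct HG as [_ HG2]. exact (HG2 D C mu l Gy Hle Hr Hx).
    - intro Hc. apply Hc; auto. intros z ->. exact Fl. }
  exists x. split; auto.
  intros x' Hx'.
  assert (Fx' : F x') by (apply Hx'; intros G HG Hg; apply Hg; reflexivity).
  apply t0.
  - intros U HU Ux. apply NNPP. intro nUx'.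
    pose proof (proj1 (Hx' x) Fl) as Hc.
    apply (Hc (fun z => ~ U z)); auto.
    + apply open_closed; auto.
    + intros z ->. exact nUx'.
  - intros U HU Ux'. apply NNPP. intro nUx.
    pose proof (proj1 (Hchar x') Fx') as Hc.
    apply (Hc (fun z => ~ U z)); auto.
    + apply open_closed; auto.
    + intros z ->. exact nUx.
Qed.

End Top.

Theorem theorem2p25 (A : CstarAlg) :
  (ACC_CA A -> sober (Sigma A) (@open_star A)) /\ (finite_dim A -> sober (Sigma A) (@open_star A)).
Proof.
  split; intro H; apply sober_of_max; apply max_exists; auto. apply fd_acc; auto.
Qed.
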